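(* The AllSet framework, as well as its extension with residual connections, are special cases of the MultiSet framework. Precisely: given any functions $f_{\mathcal{V}\to\mathcal{E}}, f_{\mathcal{E}\to\mathcal{V}}$, each permutation invariant in its first argument, defining an AllSet scheme $$\bm z_e^{(t+1)} = f_{\mathcal{V}\to\mathcal{E}}\big(\{\bm x_u^{(t)}\}_{u\in e};\ \bm z_e^{(t)}\big),\qquad \bm x_v^{(t+1)} = f_{\mathcal{E}\to\mathcal{V}}\big(\{\bm z_e^{(t+1)}\}_{e\in\mathcal{E}_v};\ \bm x_v^{(t)}\big)$$ (or the extended AllSet scheme in which the node update is instead $\bm x_v^{(t+1)} = f_{\mathcal{E}\to\mathcal{V}}\big(\{\bm z_e^{(t+1)}\}_{e\in\mathcal{E}_v};\ \{\bm x_v^{(k)}\}_{k=0}^{t}\big)$), run for $T$ steps, there is a choice of the MultiSet functions such that the MultiSet scheme reproduces exactly the hyperedge representations $\bm z_e^{(t)}$ and final node representations $\bm x_v^{(T)}$ of that AllSet (respectively extended AllSet) scheme.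
   Context: A hypergraph is $\mathcal{G}=(\mathcal{V},\mathcal{E})$ with each hyperedge $e\in\mathcal{E}$ a subset of $\mathcal{V}$; $\mathcal{E}_v=\{e\in\mathcal{E}:v\in e\}$ and $d_v=|\mathcal{E}_v|$. A function is called a multiset function if it is permutation invariant with respect to each of its (set-valued) arguments in turn. MultiSet framework: each hyperedge $e$ has a representation $\bm z_e^{(t)}\in\mathbb{R}^d$ at step $t$; each node $v$ has one representation $\bm x_{v,e}^{(t)}\in\mathbb{R}^f$ for each hyperedge $e\in\mathcal{E}_v$, and $\mathbb{X}_v^{(t)}=\{\bm x_{v,e}^{(t)}\}_{e\in\mathcal{E}_v}$. The updates are $$\bm z_e^{(t+1)}=f_{\mathcal{V}\to\mathcal{E}}\big(\{\mathbb{X}_u^{(t)}\}_{u\in e};\ \bm z_e^{(t)}\big),\qquad \bm x_{v,e}^{(t+1)}=f_{\mathcal{E}\to\mathcal{V}}\big(\{\bm z_{e}^{(t+1)}\}_{e\in\mathcal{E}_v};\ \{\mathbb{X}_v^{(k)}\}_{k=0}^{t}\big),$$ and after $T$ steps a readout $\bm x_v^{(T)}=f_{\mathcal{V}\to\mathcal{V}}\big(\{\mathbb{X}_v^{(k)}\}_{k=0}^{T}\big)$, where $f_{\mathcal{V}\to\mathcal{E}}, f_{\mathcal{E}\to\mathcal{V}}$ are multiset functions with respect to their first input and $f_{\mathcal{V}\to\mathcal{V}}$ is a multiset function. *)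

(* Defs.v *)
From mathcomp Require Import all_boot all_order all_algebra.
From mathcomp Require Import reals.
Set Implicit Arguments. Unset Strict Implicit. Unset Printing Implicit Defensive.

(* Multisets of values indexed by nodes/edges are represented as sequences
   (listed in the enumeration order of the finite type); a "multiset function"
   is a function on sequences invariant under permutation (perm_eq). *)
Section Hypergraph.
Variables (V E : finType) (inc : V -> E -> bool).
Definition nodes_of (e : E) : seq V := [seq u <- enum V | inc u e].
Definition edges_of (v : V) : seq E := [seq e <- enum E | inc v e].
End Hypergraph.

Definition ms_inv1 (A' : eqType) (B C : Type) (F : seq A' -> B -> C) : Prop :=
  forall s t b, perm_eq s t -> F s b = F t b.

Definition ms_eq2 (A : eqType) (s t : seq (seq A)) : Prop :=
  exists t', perm_eq t t' /\ all2 (fun a b => perm_eq a b) s t'.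

(* f_{V->E} of MultiSet: multiset function w.r.t. its first input
   {X_u}_{u in e}, a multiset of multisets *)
Definition ms_inv_nested (A : eqType) (B C : Type) (F : seq (seq A) -> B -> C) : Prop :=
  forall s t b, ms_eq2 s t -> F s b = F t b.

Definition ms_inv_list (A : eqType) (C : Type) (F : seq (seq A) -> C) : Prop :=
  forall s t, all2 (fun a b => perm_eq a b) s t -> F s = F t.

Section AllSet.
Variables (V E : finType) (inc : V -> E -> bool) (X Z : Type).
Variables (fVE : seq X -> Z -> Z) (fEV : seq Z -> X -> X).
Variables (x0 : V -> X) (z0 : E -> Z).

Fixpoint allset_run (t : nat) : (V -> X) * (E -> Z) :=
  match t with
  | 0 => (x0, z0)
  | t'.+1 =>
      let (x, z) := allset_run t' in
      let z' := fun e => fVE [seq x u | u <- nodes_of inc e] (z e) in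
      let x' := fun v => fEV [seq z' e | e <- edges_of inc v] (x v) in
      (x', z')
  end.
End AllSet.

Section AllSetExt.
Variables (V E : finType) (inc : V -> E -> bool) (X Z : Type).
Variables (fVE : seq X -> Z -> Z) (fEV : seq Z -> seq X -> X).
Variables (x0 : V -> X) (z0 : E -> Z).

(* (history [x^(0); ...; x^(t)], z^(t)) *)
Fixpoint allset_ext_run (t : nat) : seq (V -> X) * (E -> Z) :=
  match t with
  | 0 => ([:: x0], z0)
  | t'.+1 =>
      let (H, z) := allset_ext_run t' in
      let x := last x0 H in
      let z' := fun e => fVE [seq x u | u <- nodes_of inc e] (z e) in
      let x' := fun v => fEV [seq z' e | e <- edges_of inc v] [seq xk v | xk <- H] in
      (rcons H x', z')
  end.

Definition allset_ext_x (t : nat) (v : V) : X := last x0 (allset_ext_run t).1 v.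
End AllSetExt.

Section MultiSet.
Variables (V E : finType) (inc : V -> E -> bool) (X Z : Type).
Variables (FVE : seq (seq X) -> Z -> Z) (FEV : seq Z -> seq (seq X) -> X)
          (FVV : seq (seq X) -> X).
Variables (xm0 : V -> E -> X) (z0 : E -> Z).

Definition Xset (xm : V -> E -> X) (v : V) : seq X :=
  [seq xm v e | e <- edges_of inc v].

(* (history [x^(0); ...; x^(t)] of the families x_{.,.}, z^(t)) *)
Fixpoint multiset_run (t : nat) : seq (V -> E -> X) * (E -> Z) :=
  match t with
  | 0 => ([:: xm0], z0)
  | t'.+1 =>
      let (H, z) := multiset_run t' in
      let xcur := last xm0 H in
      let z' := fun e => FVE [seq Xset xcur u | u <- nodes_of inc e] (z e) in
      let xn := fun v (_ : E) =>
                  FEV [seq z' e | e <- edges_of inc v] [seq Xset xk v | xk <- H] in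
      (rcons H xn, z')
  end.

Definition multiset_readout (T : nat) (v : V) : X :=
  FVV [seq Xset xk v | xk <- (multiset_run T).1].
End MultiSet.

(* Main.v *)
Require Import Defs.
From mathcomp Require Import all_boot all_order all_algebra.
From mathcomp Require Import reals.

Local Open Scope ring_scope.
From Stdlib Require Import FunctionalExtensionality.
Import GRing.Theory Num.Theory.

Section Avg.
Variables (R : realType) (n : nat).
Definition avg (s : seq 'rV[R]_n) : 'rV[R]_n := (size s)%:R^-1 *: \sum_(x <- s) x.

Lemma avg_perm s t : perm_eq s t -> avg s = avg t.
Proof. by move=> p; rewrite /avg (perm_size p) (perm_big _ p). Qed.

Lemma avg_const (T : Type) (s : seq T) (x : 'rV[R]_n) :
  (0 < size s)%N -> avg [seq x | _ <- s] = x.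
Proof.
move=> ne; rewrite /avg size_map.
have -> : \sum_(y <- [seq x | _ <- s]) y = x *+ size s.
  by elim: s {ne} => [|a s IH]; rewrite ?big_nil ?big_cons // IH mulrS.
rewrite -scaler_nat scalerA mulVf ?scale1r // pnatr_eq0.
by case: s ne.
Qed.

Lemma avg_all2 s t : all2 (fun a b => perm_eq a b) s t -> map avg s = map avg t.
Proof.
elim: s t => [|a s IH] [|b t] //= /andP [p h].
by rewrite (avg_perm a b p) (IH _ h).
Qed.

Lemma all2_last_gen (s t : seq (seq 'rV[R]_n)) x y : all2 (fun a b => perm_eq a b) s t ->
  perm_eq x y -> perm_eq (last x s) (last y t).
Proof.
elim: s t x y => [|a s IH] [|b t] //= x y /andP [p h] _.
exact: IH.
Qed.

Lemma all2_last s t : all2 (fun a b => perm_eq a b) s t ->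
  avg (last [::] s) = avg (last [::] t).
Proof. by move=> h; apply/avg_perm/all2_last_gen. Qed.
End Avg.
Arguments avg {R n}.
Arguments avg_perm {R n s t}.
Arguments avg_all2 {R n s t}.
Arguments all2_last {R n s t}.

Lemma last_map_ne (A B : Type) (f : A -> B) (d : A) (b : B) (s : seq A) :
  (0 < size s)%N -> last b (map f s) = f (last d s).
Proof. by case: s => // a s _; rewrite /= last_map. Qed.
Arguments last_map_ne {A B} f d {b s}.

Theorem proposition2 (R : realType) (f d : nat)
    (V E : finType) (inc : V -> E -> bool)
    (no_isolated : forall v : V, exists e : E, inc v e) :
  (forall (fVE : seq 'rV[R]_f -> 'rV[R]_d -> 'rV[R]_d)
          (fEV : seq 'rV[R]_d -> 'rV[R]_f -> 'rV[R]_f),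
      ms_inv1 fVE -> ms_inv1 fEV ->
      exists (FVE : seq (seq 'rV[R]_f) -> 'rV[R]_d -> 'rV[R]_d)
             (FEV : seq 'rV[R]_d -> seq (seq 'rV[R]_f) -> 'rV[R]_f)
             (FVV : seq (seq 'rV[R]_f) -> 'rV[R]_f),
        [/\ ms_inv_nested FVE, ms_inv1 FEV, ms_inv_list FVV &
        forall (x0 : V -> 'rV[R]_f) (z0 : E -> 'rV[R]_d),
          (forall t e, (multiset_run inc FVE FEV (fun v _ => x0 v) z0 t).2 e
                       = (allset_run inc fVE fEV x0 z0 t).2 e) /\
          (forall T v, multiset_readout inc FVE FEV FVV (fun v _ => x0 v) z0 T v
                       = (allset_run inc fVE fEV x0 z0 T).1 v)]) /\
  (forall (fVE : seq 'rV[R]_f -> 'rV[R]_d -> 'rV[R]_d)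
          (fEV : seq 'rV[R]_d -> seq 'rV[R]_f -> 'rV[R]_f),
      ms_inv1 fVE -> ms_inv1 fEV ->
      exists (FVE : seq (seq 'rV[R]_f) -> 'rV[R]_d -> 'rV[R]_d)
             (FEV : seq 'rV[R]_d -> seq (seq 'rV[R]_f) -> 'rV[R]_f)
             (FVV : seq (seq 'rV[R]_f) -> 'rV[R]_f),
        [/\ ms_inv_nested FVE, ms_inv1 FEV, ms_inv_list FVV &
        forall (x0 : V -> 'rV[R]_f) (z0 : E -> 'rV[R]_d),
          (forall t e, (multiset_run inc FVE FEV (fun v _ => x0 v) z0 t).2 e
                       = (allset_ext_run inc fVE fEV x0 z0 t).2 e) /\
          (forall T v, multiset_readout inc FVE FEV FVV (fun v _ => x0 v) z0 T v
                       = allset_ext_x inc fVE fEV x0 z0 T v)]).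

Proof.
set lift := fun (x : V -> 'rV[R]_f) (v : V) (_ : E) => x v.
have ne v : (0 < size (edges_of inc v))%N.
  case: (no_isolated v) => e he.
  have : e \in edges_of inc v by rewrite mem_filter he mem_enum.
  by case: (edges_of inc v).
have Xl x v : avg (Xset inc (lift x) v) = x v.
  by rewrite /Xset avg_const.
have Xs x e : map (@avg R f) [seq Xset inc (lift x) u | u <- nodes_of inc e]
              = [seq x u | u <- nodes_of inc e].
  by rewrite -map_comp; apply: eq_map => u /=; rewrite Xl.
split.
- move=> fVE fEV hVE hEV.
  exists (fun S z => fVE (map (@avg R f) S) z),
         (fun zs H => fEV zs (avg (last [::] H))),
         (fun H => avg (last [::] H)).
  split.
  + move=> s t b [t' [p h]] /=.
    rewrite (avg_all2 h); apply: hVE; rewrite perm_sym; exact: perm_map.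
  + by move=> s t b p /=; apply: hEV.
  + by move=> s t h; apply: all2_last.
  move=> x0 z0.
  have inv t : let: (H, z) := multiset_run inc (fun S z => fVE (map (@avg R f) S) z)
         (fun zs H => fEV zs (avg (last [::] H))) (fun v _ => x0 v) z0 t in
      [/\ (0 < size H)%N, last (fun v _ => x0 v) H = lift (allset_run inc fVE fEV x0 z0 t).1
        & z = (allset_run inc fVE fEV x0 z0 t).2].
    elim: t => [|t IH] //=.
    case: (multiset_run _ _ _ _ _ t) IH => H z [HH1 HH2 HH3].
    case: (allset_run _ _ _ _ _ t) HH2 HH3 => x z1 /= HH2 HH3; subst z1.
    split.
    * by rewrite size_rcons.
    * rewrite last_rcons; apply: functional_extensionality => v.
      apply: functional_extensionality => ee.
      rewrite /lift /=. congr fEV.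
        by apply: eq_map => e; rewrite HH2 Xs.
      by rewrite (last_map_ne _ (fun v _ => x0 v)) // HH2 Xl.
    * by apply: functional_extensionality => e; rewrite HH2 Xs.
  split.
  + move=> t e; move: (inv t).
    by case: (multiset_run _ _ _ _ _ t) => H z [_ _ ->].
  + move=> T v; rewrite /multiset_readout; move: (inv T).
    case: (multiset_run _ _ _ _ _ T) => H z [h1 h2 _] /=.
    by rewrite (last_map_ne _ (fun v _ => x0 v)) // h2 Xl.
- move=> fVE fEV hVE hEV.
  exists (fun S z => fVE (map (@avg R f) S) z),
         (fun zs H => fEV zs (map (@avg R f) H)),
         (fun H => avg (last [::] H)).
  split.
  + move=> s t b [t' [p h]] /=.
    rewrite (avg_all2 h); apply: hVE; rewrite perm_sym; exact: perm_map.
  + by move=> s t b p /=; apply: hEV.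
  + by move=> s t h; apply: all2_last.
  move=> x0 z0.
  have inv t : multiset_run inc (fun S z => fVE (map (@avg R f) S) z)
         (fun zs H => fEV zs (map (@avg R f) H)) (fun v _ => x0 v) z0 t
      = (map lift (allset_ext_run inc fVE fEV x0 z0 t).1,
         (allset_ext_run inc fVE fEV x0 z0 t).2)
     /\ (0 < size (allset_ext_run inc fVE fEV x0 z0 t).1)%N.
    elim: t => [|t IH] //=.
    case: IH => -> /=.
    case: (allset_ext_run _ _ _ _ _ t) => H z /= hne.
    split; last by rewrite size_rcons.
    rewrite map_rcons (last_map_ne _ x0) //.
    congr (rcons _ _, _); last first.
      by apply: functional_extensionality => e; rewrite Xs.
    apply: functional_extensionality => v; apply: functional_extensionality => ee.
    rewrite /lift /=; congr fEV.
      by apply: eq_map => e; rewrite Xs.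
    by rewrite -!map_comp; apply: eq_map => xk /=; rewrite Xl.
  split.
  + by move=> t e; case: (inv t) => -> _.
  + move=> T v; rewrite /multiset_readout /allset_ext_x.
    case: (inv T) => -> /= hne.
    by rewrite -map_comp (last_map_ne _ x0) //= Xl.
Qed.
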